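(* Let $G$ be a two-player game with a finite set $\mathcal{P}$ of positions as in the context, let $\alpha$ be as defined there, and let $x$ be a Richman function for $G$. Let $T$ be the set defined from $x$ as in the context. Then $\alpha(P)=x(P)$ for all $P\in\mathcal{P}$ if and only if every position $P$ with $x(P)>0$ belongs to $T$.
   Context: The game is given by a finite set $\mathcal{P}$ of positions; each non-terminal position $P$ has a nonempty set of White options $P_w$ and a nonempty set of Black options $P_b$ (positions to which White, resp. Black, can move). Terminal positions are designated as White wins or Black wins. Define $\alpha_n:\mathcal{P}\to[0,1]$ by $\alpha_n(P)=1$ (resp. $0$) for all $n$ if $P$ is a terminal White (resp. Black) win, $\alpha_0(P)=0$ for non-terminal $P$, and $\alpha_{n+1}(P)=\frac12(\max_w\alpha_n(P_w)+\min_b\alpha_n(P_b))$ for non-terminal $P$; let $\alpha(P)=\lim_n\alpha_n(P)$ (the sequence is nondecreasing). A Richman function is a function $x:\mathcal{P}\to[0,1]$ with $x(P)=1$ at terminal White wins, $x(P)=0$ at terminal Black wins, and $x(P)=\frac12(\max_w x(P_w)+\min_b x(P_b))$ at every non-terminal $P$. A White move from $P$ to $P_w$ is $x$-greedy if $x(P_w)=\max_{w'}x(P_{w'})$. Let $T_0$ be the set of terminal positions, and for $n\ge0$ let $T_{n+1}$ consist of the positions that belong to $T_n$, or have an $x$-greedy White option in $T_n$, or have all of their Black options in $T_n$. Let $T=\bigcup_n T_n$. *)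

(* Defs.v *)
From HB Require Import structures.
From mathcomp Require Import all_boot all_order all_algebra.
From mathcomp Require Import all_classical all_reals all_analysis.
Set Implicit Arguments. Unset Strict Implicit. Unset Printing Implicit Defensive.
Import Order.TTheory GRing.Theory Num.Theory numFieldNormedType.Exports.
Local Open Scope ring_scope.

Section Game.
Variables (R : realType) (P : finType).
(* term p : p is terminal; wwin p : (for terminal p) White wins at p;
   W p, B p : sets of White / Black options of p. *)
Variables (term wwin : pred P) (W B : P -> {set P}).

(* maximum / minimum of f over a set S (used only for nonempty S) *)
Definition smax (S : {set P}) (f : P -> R) : R :=
  match [pick q in S] with
  | Some q0 => \big[Num.max/f q0]_(q in S) f q
  | None => 0 end.
Definition smin (S : {set P}) (f : P -> R) : R :=
  match [pick q in S] with
  | Some q0 => \big[Num.min/f q0]_(q in S) f q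
  | None => 0 end.

Definition termval (p : P) : R := if wwin p then 1 else 0.

Fixpoint alphan (n : nat) (p : P) : R :=
  if term p then termval p else
  match n with
  | 0 => 0
  | n'.+1 => (smax (W p) (alphan n') + smin (B p) (alphan n')) / 2
  end.

Definition alpha (p : P) : R := limn (fun n => alphan n p).

Definition richman (x : P -> R) : Prop :=
  (forall p, 0 <= x p <= 1) /\
  (forall p, term p -> x p = termval p) /\
  (forall p, ~~ term p -> x p = (smax (W p) x + smin (B p) x) / 2).

Definition greedy (x : P -> R) (p q : P) : bool :=
  (q \in W p) && (x q == smax (W p) x).

Fixpoint Tn (x : P -> R) (n : nat) : {set P} :=
  match n with
  | 0 => [set p | term p]
  | n'.+1 => [set p | (p \in Tn x n')
                   || [exists q in W p, greedy x p q && (q \in Tn x n')]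
                   || (B p \subset Tn x n')]
  end.

Definition inT (x : P -> R) (p : P) : Prop := exists n, p \in Tn x n.
End Game.

(* Main.v *)
Require Import Defs.
From HB Require Import structures.
From mathcomp Require Import all_boot all_order all_algebra.
From mathcomp Require Import all_classical all_reals all_analysis.
From mathcomp Require Import ring lra.
Import Order.TTheory GRing.Theory Num.Theory numFieldNormedType.Exports.
Local Open Scope ring_scope.
Set Implicit Arguments. Unset Strict Implicit.
Section S.
Variables (R : realType) (P : finType).

Lemma bigmax_ge_seq (r : seq P) (A : pred P) (a : R) (f : P -> R) q :
  q \in r -> A q -> f q <= \big[Num.max/a]_(i <- r | A i) f i.
Proof.
elim: r => [//|i r IH]; rewrite inE big_cons => /orP [/eqP ->|qr] Aq.
  by rewrite Aq le_max lexx.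
case: (A i); last exact: IH.
by rewrite le_max IH // orbT.
Qed.

Lemma bigmin_le_seq (r : seq P) (A : pred P) (a : R) (f : P -> R) q :
  q \in r -> A q -> \big[Num.min/a]_(i <- r | A i) f i <= f q.
Proof.
elim: r => [//|i r IH]; rewrite inE big_cons => /orP [/eqP ->|qr] Aq.
  by rewrite Aq ge_min lexx.
case: (A i); last exact: IH.
by rewrite ge_min IH // orbT.
Qed.

Lemma smax_ge (S : {set P}) (f : P -> R) q : q \in S -> f q <= smax S f.
Proof.
move=> qS; rewrite /smax; case: pickP => [q0 _|/(_ q)]; last by rewrite qS.
exact: bigmax_ge_seq (mem_index_enum _) qS.
Qed.

Lemma smin_le (S : {set P}) (f : P -> R) q : q \in S -> smin S f <= f q.
Proof.
move=> qS; rewrite /smin; case: pickP => [q0 _|/(_ q)]; last by rewrite qS.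
exact: bigmin_le_seq (mem_index_enum _) qS.
Qed.

Lemma smax_in (S : {set P}) (f : P -> R) :
  (S = finset.set0 /\ smax S f = 0) \/ exists2 q, q \in S & smax S f = f q.
Proof.
rewrite /smax; case: pickP => [q0 q0S|none]; last first.
  by left; split=> //; apply/setP => q; rewrite inE; apply: none.
right; apply: (big_ind (fun v => exists2 q, q \in S & v = f q)).
- by exists q0.
- move=> u v [q1 h1 ->] [q2 h2 ->]; rewrite /Num.max; case: ifP => _.
  by exists q2. by exists q1.
- by move=> i iS; exists i.
Qed.

Lemma smin_in (S : {set P}) (f : P -> R) :
  (S = finset.set0 /\ smin S f = 0) \/ exists2 q, q \in S & smin S f = f q.
Proof.
rewrite /smin; case: pickP => [q0 q0S|none]; last first.
  by left; split=> //; apply/setP => q; rewrite inE; apply: none.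
right; apply: (big_ind (fun v => exists2 q, q \in S & v = f q)).
- by exists q0.
- move=> u v [q1 h1 ->] [q2 h2 ->]; rewrite /Num.min; case: ifP => _.
  by exists q1. by exists q2.
- by move=> i iS; exists i.
Qed.

Lemma smax_ex (S : {set P}) (f : P -> R) : S != finset.set0 ->
  exists2 q, q \in S & smax S f = f q.
Proof. by case: (smax_in S f) => // [[-> _]]; rewrite eqxx. Qed.

Lemma smin_ex (S : {set P}) (f : P -> R) : S != finset.set0 ->
  exists2 q, q \in S & smin S f = f q.
Proof. by case: (smin_in S f) => // [[-> _]]; rewrite eqxx. Qed.

Lemma smax_mono (S : {set P}) (f g : P -> R) :
  (forall q, q \in S -> f q <= g q) -> smax S f <= smax S g.
Proof.
move=> fg; case: (smax_in S f) => [[-> ->]|[q qS ->]].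
  by case: (smax_in finset.set0 g) => [[_ ->]|[q]] //; rewrite inE.
exact: le_trans (fg q qS) (smax_ge g qS).
Qed.

Lemma smin_mono (S : {set P}) (f g : P -> R) :
  (forall q, q \in S -> f q <= g q) -> smin S f <= smin S g.
Proof.
move=> fg; case: (smin_in S g) => [[-> ->]|[q qS ->]].
  by case: (smin_in finset.set0 f) => [[_ ->]|[q]] //; rewrite inE.
exact: le_trans (smin_le f qS) (fg q qS).
Qed.

Lemma smax_ge0 (S : {set P}) (f : P -> R) : (forall q, 0 <= f q) -> 0 <= smax S f.
Proof. by move=> h; case: (smax_in S f) => [[_ ->]|[q _ ->]]. Qed.
Lemma smin_ge0 (S : {set P}) (f : P -> R) : (forall q, 0 <= f q) -> 0 <= smin S f.
Proof. by move=> h; case: (smin_in S f) => [[_ ->]|[q _ ->]]. Qed.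
End S.
Section G.
Variables (R : realType) (P : finType) (term wwin : pred P) (W B : P -> {set P}).
Hypothesis hW : forall p, ~~ term p -> W p != finset.set0.
Hypothesis hB : forall p, ~~ term p -> B p != finset.set0.
Variables (x : P -> R).
Hypothesis hx : richman term wwin W B x.

Local Notation al n := (@alphan R P term wwin W B n).
Local Notation T n := (@Tn R P term W B x n).

Lemma termval_ge0 p : 0 <= termval R wwin p.
Proof. by rewrite /termval; case: ifP. Qed.

Lemma al_term n p : term p -> al n p = termval R wwin p.
Proof. by case: n => [|n] /= ->. Qed.

Lemma al_nt n p : ~~ term p ->
  al n.+1 p = (smax (W p) (al n) + smin (B p) (al n)) / 2.
Proof. by move=> /negbTE /= ->. Qed.

Lemma al_ge0 n p : 0 <= al n p.
Proof.
elim: n p => [|n IH] p /=; case: ifP => _; rewrite ?termval_ge0 //.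
by apply: divr_ge0 => //; apply: addr_ge0; [apply: smax_ge0|apply: smin_ge0].
Qed.

Lemma super (y : P -> R) :
  (forall p, term p -> termval R wwin p <= y p) ->
  (forall p, ~~ term p -> 0 <= y p) ->
  (forall p, ~~ term p -> (smax (W p) y + smin (B p) y) / 2 <= y p) ->
  forall n p, al n p <= y p.
Proof.
move=> h1 h2 h3; elim=> [|n IH] p.
  by case tp: (term p); [rewrite al_term // h1|rewrite /= tp h2 ?tp].
case tp: (term p); first by rewrite al_term // h1.
rewrite al_nt ?tp //; apply: le_trans (h3 _ _); last by rewrite tp.
rewrite ler_pM2r ?invr_gt0 ?ltr0n //.
by apply: lerD; [apply: smax_mono|apply: smin_mono].
Qed.

Lemma al_le_x n p : al n p <= x p.
Proof.
case: hx => h01 [ht hn]; apply: super => q tq.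
- by rewrite ht.
- by case/andP: (h01 q).
- by rewrite -hn.
Qed.

Lemma al_mono n p : al n p <= al n.+1 p.
Proof.
elim: n p => [|n IH] p.
  case tp: (term p); first by rewrite !al_term.
  by have := al_ge0 1 p; rewrite /= tp.
case tp: (term p); first by rewrite !al_term.
rewrite !al_nt ?tp // ler_pM2r ?invr_gt0 ?ltr0n //.
by apply: lerD; [apply: smax_mono|apply: smin_mono].
Qed.

Lemma al_cvg p : cvgn (fun n => al n p).
Proof.
apply/cvg_ex; eexists; apply: nondecreasing_cvgn.
  by apply/nondecreasing_seqP => n; apply: al_mono.
exists 1 => _ [n _ <-]; apply: le_trans (al_le_x n p) _.
by case: hx => h01 _; case/andP: (h01 p).
Qed.

Lemma alpha_le p c : (forall n, al n p <= c) -> alpha R term wwin W B p <= c.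
Proof. by move=> h; apply: limr_le; [exact: al_cvg|apply: nearW]. Qed.


Lemma T_S n : T n \subset T n.+1.
Proof. by apply/fintype.subsetP => p pT; rewrite inE pT. Qed.

Lemma T_mono n m : (n <= m)%N -> T n \subset T m.
Proof.
move=> /subnK <-; elim: (m - n)%N => [|k IH]; first by rewrite add0n subxx.
by rewrite addSn; apply: fintype.subset_trans IH (T_S _).
Qed.

Lemma fin_T (A : pred P) : (forall q, A q -> inT term W B x q) ->
  exists n, forall q, A q -> q \in T n.
Proof.
move=> h.
suff [n hn] : exists n, forall q, q \in enum P -> A q -> q \in T n.
  by exists n => q; apply: hn; rewrite mem_enum.
elim: (enum P) => [|q0 s [n IH]]; first by exists 0%N.
case Aq: (A q0).
  have [m hm] := h q0 Aq; exists (maxn n m) => q; rewrite inE => /orP [/eqP -> _|].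
    by have := T_mono (leq_maxr n m) => /fintype.subsetP; apply.
  by move=> qs Aq'; have := T_mono (leq_maxl n m) => /fintype.subsetP; apply; apply: IH.
exists n => q; rewrite inE => /orP [/eqP ->|]; first by rewrite Aq.
exact: IH.
Qed.

Local Notation e n p := (x p - al n p).

Lemma e_ge0 n p : 0 <= e n p.
Proof. by rewrite subr_ge0 al_le_x. Qed.

Lemma e_term n p : term p -> e n p = 0.
Proof. by move=> tp; case: hx => _ [ht _]; rewrite al_term // ht // subrr. Qed.

Lemma step_err n p a : ~~ term p -> a \in W p -> x a = smax (W p) x ->
  exists2 c, c \in B p & e n.+1 p <= (e n a + e n c) / 2.
Proof.
move=> tp aW xa; have [c cB hc] := smin_ex (al n) (hB tp).
exists c => //; case: hx => _ [_ hn].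
rewrite al_nt // {1}hn // hc -xa.
have h1 := smax_ge (al n) aW; have h2 := smin_le x cB; lra.
Qed.

Lemma e_glob m E : 0 <= E -> (forall p, e m p <= E) -> forall i p, e (m + i) p <= E.
Proof.
move=> E0 hE; elim=> [|i IH] p; first by rewrite addn0.
case tp: (term p); first by rewrite e_term.
have [a aW xa] := smax_ex x (hW (negbT tp)).
have [c _ hc] := step_err (m + i) (negbT tp) aW (esym xa).
rewrite addnS; apply: le_trans hc _; have := IH a; have := IH c; lra.
Qed.

Lemma claim m E : 0 <= E -> (forall p, e m p <= E) ->
  forall j i p, p \in T j -> e (m + j + i) p <= (1 - (2^-1) ^+ j) * E.
Proof.
move=> E0 hE; elim=> [|j IH] i p.
  by rewrite inE => tp; rewrite e_term // expr0 subrr mul0r.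
have hj : (1 - 2^-1 ^+ j) * E <= (1 - 2^-1 ^+ j.+1) * E.
  rewrite ler_wpM2r // lerD2l lerN2 exprS ler_piMl ?exprn_ge0 ?invr_ge0 //.
  by rewrite invf_le1 ?ler1n.
have hk : ((1 - 2^-1 ^+ j) * E + E) / 2 = (1 - 2^-1 ^+ j.+1) * E.
  by rewrite exprS; field.
rewrite inE => /orP [/orP [pT|]|].
- by apply: le_trans hj; rewrite addnS addSnnS; apply: IH.
- case tp: (term p); first by rewrite e_term // mulr_ge0 // subr_ge0 exprn_ile1 // ?invr_ge0 // invf_le1 ?ler1n.
  case/existsP => a /andP [aW /andP [/andP [_ /eqP xa] aT]].
  have [c _ hc] := step_err (m + j + i) (negbT tp) aW xa.
  rewrite (_ : (m + j.+1 + i = (m + j + i).+1)%N); last by rewrite addnS addSn.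
  apply: le_trans hc _; rewrite -hk.
  have := IH i a aT; have := e_glob E0 hE (j + i) c; rewrite addnA; lra.
- case tp: (term p); first by rewrite e_term // mulr_ge0 // subr_ge0 exprn_ile1 // ?invr_ge0 // invf_le1 ?ler1n.
  move=> /fintype.subsetP BT.
  have [a aW xa] := smax_ex x (hW (negbT tp)).
  have [c cB hc] := step_err (m + j + i) (negbT tp) aW (esym xa).
  rewrite (_ : (m + j.+1 + i = (m + j + i).+1)%N); last by rewrite addnS addSn.
  apply: le_trans hc _; rewrite -hk.
  have := IH i c (BT c cB); have := e_glob E0 hE (j + i) a; rewrite addnA; lra.
Qed.

End G.
Section G2.
Variables (R : realType) (P : finType) (term wwin : pred P) (W B : P -> {set P}).
Hypothesis hW : forall p, ~~ term p -> W p != finset.set0.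
Hypothesis hB : forall p, ~~ term p -> B p != finset.set0.
Variables (x : P -> R).
Hypothesis hx : richman term wwin W B x.

Local Notation al n := (@alphan R P term wwin W B n).
Local Notation T n := (@Tn R P term W B x n).
Local Notation e n p := (x p - al n p).

Lemma dir2 : (forall p, 0 < x p -> inT term W B x p) ->
  forall p, alpha R term wwin W B p = x p.
Proof.
move=> hT; have [K hK] := fin_T hT.
pose l : R := 1 - 2^-1 ^+ K.
have hpos : 0 < 2^-1 ^+ K :> R by rewrite exprn_gt0 // invr_gt0.
have hle1 : 2^-1 ^+ K <= 1 :> R by rewrite exprn_ile1 // ?invr_ge0 // invf_le1 ?ler1n.
have l0 : 0 <= l by rewrite subr_ge0.
have l1 : l < 1 by rewrite /l; lra.
have iter : forall t p, e (t * K) p <= l ^+ t.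
  elim=> [|t IH] p.
    rewrite mul0n expr0; have := al_ge0 R term wwin W B 0 p.
    by case: hx => h01 _; case/andP: (h01 p) => _; lra.
  case: (ltrP 0 (x p)) => xp.
    have := claim hW hB hx (exprn_ge0 t l0) IH 0%N (hK p xp).
    by rewrite addn0 -mulSnr exprS.
  have := al_ge0 R term wwin W B (t.+1 * K) p; have := exprn_ge0 t.+1 l0; lra.
move=> p; apply/le_anti/andP; split.
  by apply: (alpha_le hx) => n; exact: (al_le_x hx).
have cv : ((fun t => x p - l ^+ t) @ \oo --> x p)%classic.
  have := cvgB (cvg_cst (x p)) (cvg_expr (z:=l) _); rewrite subr0; apply.
  by rewrite ger0_norm.
apply: (cvgr_to_le cv); apply: nearW => t.
have := nondecreasing_cvgn_le (u_ := fun n => al n p) _ (al_cvg hx (p:=p)) (t * K)%N.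
have := iter t p; move=> h1 h2.
suff h3 : al (t * K) p <= alpha R term wwin W B p by lra.
apply: h2; apply/nondecreasing_seqP => n; exact: al_mono.
Qed.


Lemma dir1 : (forall p, alpha R term wwin W B p = x p) ->
  forall p, 0 < x p -> inT term W B x p.
Proof.
move=> hal p0 xp0; case: (pselect (inT term W B x p0)) => // np0; exfalso.
have hx' := hx; case: hx' => h01 [ht hn].
pose U := [set p | ~~ `[< inT term W B x p >] ].
have U_inT : forall p, p \in U -> ~ inT term W B x p.
  by move=> p; rewrite inE => /asboolPn.
have p0U : p0 \in U by rewrite inE; apply/asboolPn.
have U_nt : forall p, p \in U -> ~~ term p.
  move=> p /U_inT h; apply/negP => tp; apply: h; exists 0%N; by rewrite inE.
have U_gr : forall p a, p \in U -> a \in W p -> x a = smax (W p) x -> a \in U.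
  move=> p a pU aW xa; rewrite inE; apply/asboolPn => -[n an]; apply: (U_inT p pU).
  exists n.+1; rewrite inE; apply/orP; left; apply/orP; right; apply/existsP.
  by exists a; rewrite aW /greedy aW xa eqxx an.
have U_bl : forall p, p \in U -> exists2 b, b \in B p & b \in U.
  move=> p pU; case: (pselect (exists2 b, b \in B p & b \in U)) => // nb; exfalso.
  have h : forall q, q \in B p -> inT term W B x q.
    move=> q qB; case: (pselect (inT term W B x q)) => // nq; exfalso.
    by apply: nb; exists q => //; rewrite inE; apply/asboolPn.
  have [n hn'] := fin_T (A := fun q => q \in B p) h.
  apply: (U_inT p pU); exists n.+1; rewrite inE; apply/orP; right.
  by apply/fintype.subsetP => q; apply: hn'.
have Un0 : U != finset.set0 by apply/set0Pn; exists p0.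
have [pm pmU hpm] := smax_ex x Un0.
set M := x pm.
have hM : forall q, q \in U -> x q <= M by move=> q qU; rewrite /M -hpm; apply: smax_ge.
have M0 : 0 < M by apply: lt_le_trans xp0 (hM _ p0U).
pose S := [set p in U | x p == M].
have key : forall p, p \in S -> smax (W p) x = M /\ exists2 b, b \in B p & b \in S.
  move=> p; rewrite inE => /andP [pU /eqP xp]; have ntp := U_nt p pU.
  have [a aW xa] := smax_ex x (hW ntp).
  have aU := U_gr p a pU aW (esym xa).
  have [b bB bU] := U_bl p pU.
  have := hM a aU; have := hM b bU; have := smin_le x bB; have := hn p ntp.
  rewrite xp -xa => h1 h2 h3 h4; split; first lra.
  by exists b => //; rewrite inE bU /=; apply/eqP; lra.
pose S' := [set w | x w < M].
have [c [c0 cM hc]] : exists c, [/\ 0 <= c, c < M & forall w, x w < M -> x w <= c].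
  exists (Num.max 0 (smax S' x)); split.
  - by rewrite le_max lexx.
  - rewrite gt_max M0 /=; case: (smax_in S' x) => [[_ ->]|[q]] //.
    by rewrite inE => qM ->.
  - move=> w wM; rewrite le_max; apply/orP; right; apply: smax_ge.
    by rewrite inE.
pose y p := if p \in S then c else x p.
have SU : forall p, p \in S -> p \in U by move=> p; rewrite inE => /andP [].
have hsup := @super R P term wwin W B y.
have : forall n, al n pm <= y pm.
  move=> n; apply: hsup => p.
  - move=> tp; rewrite /y; case: ifP => pS.
      by have := U_nt p (SU p pS); rewrite tp.
    by rewrite ht.
  - by move=> _; rewrite /y; case: ifP => _ //; case/andP: (h01 p).
  - move=> ntp; rewrite /y; case: ifP => pS.
      have [hmax [b bB bS]] := key p pS.
      have [w wW hw] := smax_ex y (hW ntp).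
      have hmin := smin_le y bB.
      have hy : smax (W p) y <= c.
        rewrite hw /y; case: ifP => wS //; apply: hc.
        rewrite lt_neqAle -hmax smax_ge // andbT; apply/negP => /eqP xw.
        by move: wS; rewrite inE (U_gr p w (SU p pS) wW xw) /= xw hmax eqxx.
      move: hmin; rewrite {2}/y bS => hmin.
      lra.
    rewrite (hn p ntp) ler_pM2r ?invr_gt0 ?ltr0n //.
    have yx : forall q, y q <= x q.
      move=> q; rewrite /y; case: ifP => //; rewrite inE => /andP [_ /eqP ->]; exact: ltW.
    by apply: lerD; [apply: smax_mono|apply: smin_mono] => q _; apply: yx.
move=> /(alpha_le hx); rewrite hal /y.
have -> : pm \in S by rewrite inE pmU /= eqxx.
by move: cM; rewrite /M; lra.
Qed.

End G2.

Unset Implicit Arguments. Set Strict Implicit.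

Theorem proposition2 (R : realType) (P : finType) (term wwin : pred P)
    (W B : P -> {set P})
    (hW : forall p, ~~ term p -> W p != finset.set0)
    (hB : forall p, ~~ term p -> B p != finset.set0)
    (x : P -> R) (hx : richman term wwin W B x) :
  (forall p, @alpha R P term wwin W B p = x p) <->
  (forall p, 0 < x p -> @inT R P term W B x p).
Proof.
split; [exact: (dir1 hW hx) | exact: (dir2 hW hB hx)].
Qed.
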